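(* Let $f(z)=\sum_{k\ge0}a_kz^k$ be an entire function. If $f$ is transcendental then, for all $n\in\mathbb N$, $\kappa(n,r)\to\infty$ as $r\to\infty$. If $f$ is a polynomial of degree $d$, then $\kappa(n,r)\to\infty$ as $r\to\infty$ for all $n\ne d$, but $\kappa(d,r)\to 1$ as $r\to\infty$.
   Context: For $r>0$, $M_1(r)=\frac{1}{2\pi}\int_0^{2\pi}|f(re^{i\theta})|\,d\theta$ and $\kappa(n,r)=\dfrac{M_1(r)}{|a_n|r^n}$, with the convention $\kappa(n,r)=+\infty$ if $a_n=0$. *)

(* Defs.v *)
From Stdlib Require Export Reals.
From Coquelicot Require Export Coquelicot.
Open Scope R_scope.

Definition entire_with_coeffs (a : nat -> C) (f : C -> C) : Prop :=
  forall z : C, is_pseries a z (f z).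

Definition M1 (f : C -> C) (r : R) : R :=
  / (2 * PI) * RInt (fun t => Cmod (f (r * cos t, r * sin t))) 0 (2 * PI).

Definition kappa (a : nat -> C) (f : C -> C) (n : nat) (r : R) : Rbar :=
  match Req_EM_T (Cmod (a n)) 0 with
  | left _ => p_infty
  | right _ => Finite (M1 f r / (Cmod (a n) * r ^ n))
  end.

Definition tends_to_infty (g : R -> Rbar) : Prop :=
  forall M : R, exists R0 : R, forall r : R, R0 < r -> Rbar_lt (Finite M) (g r).

Definition tends_to_fin (g : R -> Rbar) (l : R) : Prop :=
  forall eps : R, 0 < eps -> exists R0 : R, forall r : R, R0 < r ->
    exists k : R, g r = Finite k /\ Rabs (k - l) < eps.

Definition poly_degree (a : nat -> C) (d : nat) : Prop :=
  a d <> 0%C /\ forall k : nat, (d < k)%nat -> a k = 0%C.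

Definition transcendental (a : nat -> C) : Prop :=
  forall N : nat, exists k : nat, (N <= k)%nat /\ a k <> 0%C.

(* Main.v *)
Require Import Defs.
From Stdlib Require Import Lra Lia.

Definition zc (r t : R) : C := (r * cos t, r * sin t).
Definition term (a : nat -> C) (r : R) (j : nat) (t : R) : C := scal (pow_n (zc r t) j) (a j).
Definition Sp (a : nat -> C) (r : R) (N : nat) (t : R) : C := sum_n (fun j => term a r j t) N.

Lemma DM (r t : R) (j : nat) :
  pow_n (zc r t) j = (r ^ j * cos (INR j * t), r ^ j * sin (INR j * t)).
Proof.
  induction j as [|j IH].
  - simpl. rewrite Rmult_0_l, cos_0, sin_0. change (@one C_Ring) with (RtoC 1). unfold RtoC. f_equal; ring.
  - change (pow_n (zc r t) (S j)) with (Cmult (zc r t) (pow_n (zc r t) j)).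
    rewrite IH.
    replace (INR (S j) * t) with (t + INR j * t) by (rewrite S_INR; ring).
    rewrite cos_plus, sin_plus. unfold zc, Cmult; simpl. f_equal; ring.
Qed.

Lemma Cmod_cs (x : R) : Cmod (cos x, sin x) = 1.
Proof.
  unfold Cmod; simpl. pose proof (sin2_cos2 x) as H. unfold Rsqr in H.
  replace (cos x * (cos x * 1) + sin x * (sin x * 1)) with 1 by lra. apply sqrt_1.
Qed.

Lemma Cmod_cs' (x : R) : Cmod (cos x, - sin x) = 1.
Proof.
  unfold Cmod; simpl. pose proof (sin2_cos2 x) as H. unfold Rsqr in H.
  replace (cos x * (cos x * 1) + - sin x * (- sin x * 1)) with 1 by lra. apply sqrt_1.
Qed.

Lemma Cmod_term (a : nat -> C) (r t : R) (j : nat) : 0 <= r ->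
  Cmod (term a r j t) = r ^ j * Cmod (a j).
Proof.
  intros Hr. unfold term. change (scal (pow_n (zc r t) j) (a j)) with (Cmult (pow_n (zc r t) j) (a j)).
  rewrite Cmod_mult, DM. f_equal.
  replace (r ^ j * cos (INR j * t), r ^ j * sin (INR j * t)) with
    (Cmult (RtoC (r ^ j)) (cos (INR j * t), sin (INR j * t))).
  2:{ unfold Cmult, RtoC; simpl. f_equal; ring. }
  rewrite Cmod_mult, Cmod_cs, Cmod_R, Rmult_1_r. apply Rabs_pos_eq. apply pow_le; auto.
Qed.

Lemma Cmod_sub_sym (x y : C) : Cmod (x - y) = Cmod (y - x).
Proof. replace (x - y)%C with (- (y - x))%C by ring. apply Cmod_opp. Qed.

Lemma Cmod_sub_tri (x y w : C) : Cmod (x - w) <= Cmod (x - y) + Cmod (y - w).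
Proof. replace (x - w)%C with ((x - y) + (y - w))%C by ring. apply Cmod_triangle. Qed.

Lemma series_closed (u : nat -> C) (l v : C) (c : R) (N : nat) :
  is_series u l -> (forall M, (N <= M)%nat -> Cmod (sum_n u M - v) <= c) -> Cmod (l - v) <= c.
Proof.
  intros Hs Hb. destruct (Rle_lt_dec (Cmod (l - v)) c) as [h|h]; auto. exfalso.
  assert (He : 0 < Cmod (l - v) - c) by lra.
  pose proof (proj1 (filterlim_locally_ball_norm _ _) Hs (mkposreal _ He)) as [N0 HN0].
  specialize (HN0 (max N N0) (Nat.le_max_r _ _)). unfold ball_norm in HN0. simpl in HN0.
  specialize (Hb (max N N0) (Nat.le_max_l _ _)).
  change (norm (minus (sum_n u (max N N0)) l)) with (Cmod (sum_n u (max N N0) - l)) in HN0.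
  pose proof (Cmod_sub_tri l (sum_n u (max N N0)) v). rewrite Cmod_sub_sym in HN0. lra.
Qed.

Lemma terms_small (u : nat -> C) (l : C) : is_series u l ->
  exists J, forall j, (J <= j)%nat -> Cmod (u j) <= 1.
Proof.
  intros Hs. assert (He : 0 < /2) by lra.
  pose proof (proj1 (filterlim_locally_ball_norm _ _) Hs (mkposreal _ He)) as [N0 HN0].
  exists (S N0). intros j Hj. destruct j as [|j]; [lia|].
  pose proof (HN0 j ltac:(lia)) as H1. pose proof (HN0 (S j) ltac:(lia)) as H2.
  unfold ball_norm in H1, H2; simpl in H1, H2.
  change (norm (minus (sum_n u j) l)) with (Cmod (sum_n u j - l)) in H1.
  change (norm (minus (sum_n u (S j)) l)) with (Cmod (sum_n u (S j) - l)) in H2.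
  rewrite sum_Sn in H2. change (plus (sum_n u j) (u (S j))) with (sum_n u j + u (S j))%C in H2.
  replace (u (S j)) with ((sum_n u j + u (S j) - l) - (sum_n u j - l))%C by ring.
  pose proof (Cmod_sub_tri (sum_n u j + u (S j) - l) 0 (sum_n u j - l)).
  replace ((sum_n u j + u (S j) - l) - 0)%C with (sum_n u j + u (S j) - l)%C in H by ring.
  replace (0 - (sum_n u j - l))%C with (- (sum_n u j - l))%C in H by ring.
  rewrite Cmod_opp in H. lra.
Qed.

Lemma coef_small (a : nat -> C) (f : C -> C) (r : R) :
  entire_with_coeffs a f -> 0 < r ->
  exists J, forall j t, (J <= j)%nat -> Cmod (term a r j t) <= (/2) ^ j.
Proof.
  intros Hf Hr. destruct (terms_small _ _ (Hf (zc (2 * r) 0))) as [J HJ].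
  exists J. intros j t Hj. specialize (HJ j Hj).
  change (Cmod (term a (2*r) j 0) <= 1) in HJ.
  rewrite Cmod_term in HJ by lra. rewrite Cmod_term by lra.
  rewrite Rpow_mult_distr in HJ.
  assert (H2 : 0 < 2 ^ j) by (apply pow_lt; lra).
  rewrite pow_inv.
  apply (Rmult_le_reg_l (2 ^ j)); auto.
  rewrite Rinv_r by lra. lra.
Qed.

Lemma tail_partial (a : nat -> C) (r : R) (J : nat) (t : R) :
  (forall j, (J <= j)%nat -> Cmod (term a r j t) <= (/2) ^ j) ->
  forall N m, (J <= N)%nat -> Cmod (Sp a r (N + m) t - Sp a r N t) <= (/2) ^ N - (/2) ^ (N + m).
Proof.
  intros HJ N m HN. induction m as [|m IH].
  - rewrite Nat.add_0_r. replace (Sp a r N t - Sp a r N t)%C with (RtoC 0) by ring.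
    rewrite Cmod_0. lra.
  - replace (N + S m)%nat with (S (N + m)) by lia. unfold Sp in *. rewrite sum_Sn.
    change (plus (sum_n (fun j : nat => term a r j t) (N + m)) (term a r (S (N + m)) t))
      with (sum_n (fun j : nat => term a r j t) (N + m) + term a r (S (N + m)) t)%C.
    replace (sum_n (fun j : nat => term a r j t) (N + m) + term a r (S (N + m)) t -
      sum_n (fun j : nat => term a r j t) N)%C with
      ((sum_n (fun j : nat => term a r j t) (N + m) - sum_n (fun j : nat => term a r j t) N) + term a r (S (N + m)) t)%C by ring.
    eapply Rle_trans; [apply Cmod_triangle|].
    pose proof (HJ (S (N + m)) ltac:(lia)). simpl pow in *. lra.
Qed.

Lemma tail_bound (a : nat -> C) (f : C -> C) (r : R) :
  entire_with_coeffs a f -> 0 < r ->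
  exists J, forall N t, (J <= N)%nat -> Cmod (f (zc r t) - Sp a r N t) <= (/2) ^ N.
Proof.
  intros Hf Hr. destruct (coef_small a f r Hf Hr) as [J HJ]. exists J.
  intros N t HN. apply (series_closed _ _ _ _ N (Hf (zc r t))).
  intros M HM. replace M with (N + (M - N))%nat by lia.
  pose proof (tail_partial a r J t (fun j Hj => HJ j t Hj) N (M - N) HN).
  assert (0 <= (/2) ^ (N + (M - N))) by (apply pow_le; lra).
  change (sum_n (fun k : nat => scal (pow_n (zc r t) k) (a k)) (N + (M - N))) with (Sp a r (N + (M - N)) t). lra.
Qed.

Lemma unif (a : nat -> C) (f : C -> C) (r : R) (phi : R -> C -> R) :
  entire_with_coeffs a f -> 0 < r ->
  (forall t u v, Rabs (phi t u - phi t v) <= Cmod (u - v)) ->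
  filterlim (fun N (t : R) => phi t (Sp a r N t)) eventually
    (@locally (fct_UniformSpace R R_CompleteNormedModule) (fun t => phi t (f (zc r t)))).
Proof.
  intros Hf Hr Hphi. destruct (tail_bound a f r Hf Hr) as [J HJ].
  apply filterlim_locally. intros eps.
  destruct (pow_lt_1_zero (/2) ltac:(rewrite Rabs_pos_eq; lra) eps (cond_pos eps)) as [N0 HN0].
  exists (max J N0). intros N HN t.
  change (Rabs (phi t (Sp a r N t) - phi t (f (zc r t))) < eps).
  eapply Rle_lt_trans; [apply Hphi|]. rewrite Cmod_sub_sym.
  eapply Rle_lt_trans; [apply HJ; lia|].
  specialize (HN0 N ltac:(lia)). rewrite Rabs_pos_eq in HN0; auto. apply pow_le; lra.
Qed.

Lemma term_comp (a : nat -> C) (r t : R) (j : nat) :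
  term a r j t = (r^j*cos(INR j*t)*fst(a j) - r^j*sin(INR j*t)*snd(a j),
                  r^j*cos(INR j*t)*snd(a j) + r^j*sin(INR j*t)*fst(a j)).
Proof.
  unfold term. change (scal (pow_n (zc r t) j) (a j)) with (Cmult (pow_n (zc r t) j) (a j)).
  rewrite DM. destruct (a j) as [p q]. unfold Cmult; simpl. f_equal; ring.
Qed.

Lemma Sp_S (a : nat -> C) (r t : R) (N : nat) : Sp a r (S N) t = (Sp a r N t + term a r (S N) t)%C.
Proof. unfold Sp. rewrite sum_Sn. reflexivity. Qed.

Lemma Sp_deriv (a : nat -> C) (r : R) (N : nat) :
  forall t, ex_derive (fun t => fst (Sp a r N t)) t /\ ex_derive (fun t => snd (Sp a r N t)) t.
Proof.
  induction N as [|N IH]; intros t.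
  - unfold Sp. split.
    + apply (ex_derive_ext (fun t => r^0*cos(INR 0*t)*fst(a 0%nat) - r^0*sin(INR 0*t)*snd(a 0%nat))).
      { intros s. rewrite sum_O, term_comp. reflexivity. }
      auto_derive. auto.
    + apply (ex_derive_ext (fun t => r^0*cos(INR 0*t)*snd(a 0%nat) + r^0*sin(INR 0*t)*fst(a 0%nat))).
      { intros s. rewrite sum_O, term_comp. reflexivity. }
      auto_derive. auto.
  - destruct (IH t) as [H1 H2]. split.
    + apply (ex_derive_ext (fun t => fst (Sp a r N t) + (r^(S N)*cos(INR (S N)*t)*fst(a (S N)) - r^(S N)*sin(INR (S N)*t)*snd(a (S N))))).
      { intros s. rewrite Sp_S, term_comp. reflexivity. }
      apply (ex_derive_plus (fun t => fst (Sp a r N t))); auto. auto_derive. auto.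
    + apply (ex_derive_ext (fun t => snd (Sp a r N t) + (r^(S N)*cos(INR (S N)*t)*snd(a (S N)) + r^(S N)*sin(INR (S N)*t)*fst(a (S N))))).
      { intros s. rewrite Sp_S, term_comp. reflexivity. }
      apply (ex_derive_plus (fun t => snd (Sp a r N t))); auto. auto_derive. auto.
Qed.

Lemma Sp_Cmod_cont (a : nat -> C) (r : R) (N : nat) (t : R) :
  continuous (fun t => Cmod (Sp a r N t)) t.
Proof.
  unfold Cmod. apply continuous_sqrt_comp. apply (@ex_derive_continuous R_AbsRing R_NormedModule (fun t => fst (Sp a r N t) ^ 2 + snd (Sp a r N t) ^ 2)).
  destruct (Sp_deriv a r N t) as [H1 H2].
  apply (ex_derive_plus (fun t => fst (Sp a r N t) ^ 2)); apply ex_derive_pow; auto.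
Qed.

Lemma Cmod_f_int (a : nat -> C) (f : C -> C) (r : R) :
  entire_with_coeffs a f -> 0 < r ->
  ex_RInt (fun t => Cmod (f (zc r t))) 0 (2 * PI).
Proof.
  intros Hf Hr.
  destruct (filterlim_RInt (fun N t => Cmod (Sp a r N t)) 0 (2*PI) eventually eventually_filter
    (fun t => Cmod (f (zc r t))) (fun N => RInt (fun t => Cmod (Sp a r N t)) 0 (2*PI))) as [If [_ HI]].
  - intros N. apply RInt_correct. apply ex_RInt_continuous. intros; apply Sp_Cmod_cont.
  - apply (unif a f r (fun _ u => Cmod u)); auto. intros t u v.
    pose proof (Cmod_sub_tri u v 0) as H. pose proof (Cmod_sub_tri v u 0) as H0.
    pose proof (Cmod_sub_sym u v) as H1.
    replace (u - 0)%C with u in * by ring. replace (v - 0)%C with v in * by ring.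
    apply Rabs_le. lra.
  - exists If. exact HI.
Qed.

Lemma trig_int_nz (m b1 b2 : R) (z : Z) : m = IZR z -> m <> 0 ->
  is_RInt (fun t => b1 * cos (m*t) - b2 * sin (m*t)) 0 (2*PI) 0.
Proof.
  intros Hm Hm0.
  set (F := fun t => b1 * sin (m*t) / m + b2 * cos (m*t) / m).
  assert (Hs : sin (m * (2*PI)) = 0).
  { apply sin_eq_0_1. exists (2 * z)%Z. rewrite mult_IZR, Hm. simpl. ring. }
  assert (Hc : cos (m * (2*PI)) = 1).
  { replace (m * (2*PI)) with (2 * (m * PI)) by ring. rewrite cos_2a_sin.
    rewrite (sin_eq_0_1 (m * PI)). ring. exists z. rewrite Hm. ring. }
  assert (E : minus (F (2*PI)) (F 0) = 0).
  { unfold F. rewrite Hs, Hc, (Rmult_0_r m), sin_0, cos_0.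
    unfold minus, plus, opp; simpl. ring. }
  assert (H : is_RInt (fun t => b1 * cos (m*t) - b2 * sin (m*t)) 0 (2*PI) (minus (F (2*PI)) (F 0))).
  { apply (@is_RInt_derive R_CompleteNormedModule F (fun t => b1 * cos (m*t) - b2 * sin (m*t))).
    - intros x _. unfold F. auto_derive. auto. field. auto.
    - intros x _. apply (@ex_derive_continuous R_AbsRing R_NormedModule (fun t => b1 * cos (m*t) - b2 * sin (m*t))).
      auto_derive. auto. }
  rewrite E in H. exact H.
Qed.

Definition wk (c : C) (k : nat) (t : R) : C := Cmult c (cos (INR k * t), - sin (INR k * t)).

Lemma phi_term (a : nat -> C) (c : C) (r t : R) (j k : nat) :
  fst (wk c k t * term a r j t)%C =
  r^j * (fst (c * a j)%C * cos ((INR j - INR k) * t) - snd (c * a j)%C * sin ((INR j - INR k) * t)).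
Proof.
  unfold wk. rewrite term_comp. replace ((INR j - INR k) * t) with (INR j * t - INR k * t) by ring.
  rewrite cos_minus, sin_minus. destruct c as [c1 c2]. destruct (a j) as [p q].
  unfold Cmult; simpl. ring.
Qed.

Lemma term_int (a : nat -> C) (c : C) (r : R) (j k : nat) :
  is_RInt (fun t => fst (wk c k t * term a r j t)%C) 0 (2*PI)
    (if Nat.eq_dec j k then r^k * (2*PI*fst (c * a k)%C) else 0).
Proof.
  destruct (Nat.eq_dec j k) as [<-|Hjk].
  - apply (is_RInt_ext (fun _ => r^j * fst (c * a j)%C)).
    { intros x _. rewrite phi_term. replace ((INR j - INR j) * x) with 0 by ring. rewrite cos_0, sin_0, Rmult_1_r, Rmult_0_r, Rminus_0_r. reflexivity. }
    replace (r ^ j * (2 * PI * fst (c * a j)%C)) with (scal (2*PI - 0) (r^j * fst (c * a j)%C)).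
    2:{ unfold scal; simpl. unfold mult; simpl. ring. }
    apply (@is_RInt_const R_NormedModule).
  - apply (is_RInt_ext (fun t => scal (r^j) (fst (c * a j)%C * cos ((INR j - INR k) * t) - snd (c * a j)%C * sin ((INR j - INR k) * t)))).
    { intros x _. rewrite phi_term. reflexivity. }
    replace 0 with (scal (r^j) 0) at 2.
    2:{ unfold scal; simpl. unfold mult; simpl. ring. }
    apply (@is_RInt_scal R_NormedModule). apply (trig_int_nz _ _ _ (Z.of_nat j - Z.of_nat k)).
    + rewrite minus_IZR, <- !INR_IZR_INZ. reflexivity.
    + intros H. apply Hjk. apply INR_eq. lra.
Qed.

Lemma Sp_int (a : nat -> C) (c : C) (r : R) (k : nat) (N : nat) :
  is_RInt (fun t => fst (wk c k t * Sp a r N t)%C) 0 (2*PI)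
    (sum_n (fun j => if Nat.eq_dec j k then r^k * (2*PI*fst (c * a k)%C) else 0) N).
Proof.
  induction N as [|N IH].
  - rewrite sum_O. apply (is_RInt_ext (fun t => fst (wk c k t * term a r 0 t)%C)).
    { intros x _. unfold Sp. rewrite sum_O. reflexivity. }
    apply term_int.
  - rewrite sum_Sn.
    apply (is_RInt_ext (fun t => plus (fst (wk c k t * Sp a r N t)%C) (fst (wk c k t * term a r (S N) t)%C))).
    { intros x _. rewrite Sp_S. unfold plus; simpl. destruct (wk c k x), (Sp a r N x), (term a r (S N) x).
      unfold Cmult, Cplus; simpl. ring. }
    apply (@is_RInt_plus R_NormedModule); auto. apply term_int.
Qed.

Lemma sum_delta (V : R) (k N : nat) :
  sum_n (fun j => if Nat.eq_dec j k then V else 0) N = if Compare_dec.le_dec k N then V else 0.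
Proof.
  induction N as [|N IH].
  - rewrite sum_O. destruct (Nat.eq_dec 0 k), (Compare_dec.le_dec k 0); auto; lia.
  - rewrite sum_Sn, IH. change (plus ?x ?y) with (x + y).
    destruct (Nat.eq_dec (S N) k), (Compare_dec.le_dec k N), (Compare_dec.le_dec k (S N)); try lia; simpl; ring.
Qed.

Lemma choose_c (w : C) : exists c : C, Cmod c <= 1 /\ fst (c * w)%C = Cmod w.
Proof.
  destruct (Req_EM_T (Cmod w) 0) as [H|H].
  - exists (RtoC 0). rewrite Cmod_0, H. split; [lra|]. simpl. ring.
  - exists (Cconj w / RtoC (Cmod w))%C. split.
    + rewrite Cmod_div, Cmod_conj, Cmod_R, Rabs_pos_eq by (try apply Cmod_ge_0; intro E; apply H; injection E; auto).
      right. field. auto.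
    + assert (Hm : 0 < Cmod w) by (pose proof (Cmod_ge_0 w); lra).
      pose proof (Cmod2_conj w) as E.
      destruct w as [p q]. unfold Cmod in *. simpl in *.
      unfold Cdiv, Cmult, Cinv, Cconj, RtoC. simpl.
      set (s := sqrt (p * (p * 1) + q * (q * 1))) in *.
      assert (Hs2 : s * s = p * p + q * q).
      { unfold s. rewrite sqrt_sqrt. ring. nra. }
      replace (s * (s * 1) + 0 * (0 * 1)) with (s * s) by ring.
      field_simplify; [|lra]. replace (p ^ 2 * s + s * q ^ 2) with (s * (s * s)) by (rewrite Hs2; ring). field. lra.
Qed.

Lemma Cmod_wk (c : C) (k : nat) (t : R) : Cmod c <= 1 -> Cmod (wk c k t) <= 1.
Proof. intros H. unfold wk. rewrite Cmod_mult, Cmod_cs'. lra. Qed.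

Lemma cauchy_lb (a : nat -> C) (f : C -> C) (r : R) (k : nat) :
  entire_with_coeffs a f -> 0 < r -> Cmod (a k) * r ^ k <= M1 f r.
Proof.
  intros Hf Hr. destruct (choose_c (a k)) as [c [Hc1 Hc2]].
  set (V := r^k * (2*PI*fst (c * a k)%C)).
  destruct (filterlim_RInt (fun N t => fst (wk c k t * Sp a r N t)%C) 0 (2*PI) eventually eventually_filter
    (fun t => fst (wk c k t * f (zc r t))%C)
    (fun N => sum_n (fun j => if Nat.eq_dec j k then V else 0) N)) as [If [HIf HI]].
  - intros N. apply Sp_int.
  - apply (unif a f r (fun t u => fst (wk c k t * u)%C)); auto. intros t u v.
    replace (fst (wk c k t * u)%C - fst (wk c k t * v)%C) with (fst (wk c k t * (u - v))%C)
      by (destruct (wk c k t), u, v; unfold Cmult, Cminus, Cplus, Copp; simpl; ring).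
    eapply Rle_trans; [apply re_le_Cmod|]. rewrite Cmod_mult.
    pose proof (Cmod_wk c k t Hc1). pose proof (Cmod_ge_0 (u - v)%C). nra.
  - assert (HV : filterlim (fun N => sum_n (fun j => if Nat.eq_dec j k then V else 0) N) eventually (locally V)).
    { apply filterlim_locally. intros eps. exists k. intros N HN.
      rewrite sum_delta. destruct (Compare_dec.le_dec k N); [|lia]. apply ball_center. }
    assert (E : If = V).
    { apply (@filterlim_locally_unique nat R_AbsRing R_NormedModule eventually _ (fun N => sum_n (fun j => if Nat.eq_dec j k then V else 0) N)); assumption. }
    subst If.
    assert (Hint := Cmod_f_int a f r Hf Hr).
    assert (Hle : RInt (fun t => fst (wk c k t * f (zc r t))%C) 0 (2*PI) <= RInt (fun t => Cmod (f (zc r t))) 0 (2*PI)).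
    { apply RInt_le; auto. pose proof PI_RGT_0; lra. exists V; auto.
      intros x _. eapply Rle_trans; [apply Rle_abs|]. eapply Rle_trans; [apply re_le_Cmod|].
      rewrite Cmod_mult. pose proof (Cmod_wk c k x Hc1). pose proof (Cmod_ge_0 (f (zc r x))). nra. }
    rewrite (is_RInt_unique _ _ _ _ HI) in Hle.
    unfold M1. change (fun t => Cmod (f (r * cos t, r * sin t))) with (fun t => Cmod (f (zc r t))).
    unfold V in Hle. rewrite Hc2 in Hle. pose proof PI_RGT_0.
    replace (Cmod (a k) * r^k) with (/(2*PI) * (r^k*(2*PI*Cmod(a k)))) by (field; lra).
    apply Rmult_le_compat_l; [|exact Hle]. left. apply Rinv_0_lt_compat; lra.
Qed.

Lemma Sp_norm (a : nat -> C) (r t : R) (N : nat) : 0 <= r ->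
  Cmod (Sp a r N t) <= sum_n (fun j => Cmod (a j) * r ^ j) N.
Proof.
  intros Hr. induction N as [|N IH].
  - unfold Sp. rewrite !sum_O, Cmod_term by auto. lra.
  - rewrite Sp_S, sum_Sn. change (plus ?x ?y) with (x + y).
    eapply Rle_trans; [apply Cmod_triangle|]. rewrite Cmod_term by auto. lra.
Qed.

Lemma sum_ext_zero (g : nat -> R) (d : nat) : (forall k, (d < k)%nat -> g k = 0) ->
  forall m, sum_n g (d + m) = sum_n g d.
Proof.
  intros Hg m. induction m as [|m IH].
  - rewrite Nat.add_0_r. reflexivity.
  - replace (d + S m)%nat with (S (d + m)) by lia. rewrite sum_Sn, IH, Hg by lia.
    change (plus ?x ?y) with (x + y). simpl. ring.
Qed.

Lemma poly_ub (a : nat -> C) (f : C -> C) (r : R) (d : nat) :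
  entire_with_coeffs a f -> poly_degree a d -> 0 < r ->
  M1 f r <= sum_n (fun j => Cmod (a j) * r ^ j) d.
Proof.
  intros Hf [Hd Hz] Hr. set (B := sum_n (fun j => Cmod (a j) * r ^ j) d).
  assert (Hpt : forall t, Cmod (f (zc r t)) <= B).
  { intros t. replace (f (zc r t)) with (f (zc r t) - 0)%C by ring.
    apply (series_closed _ _ _ _ d (Hf (zc r t))). intros M HM.
    change (sum_n (fun k : nat => scal (pow_n (zc r t) k) (a k)) M) with (Sp a r M t).
    replace (Sp a r M t - 0)%C with (Sp a r M t) by ring.
    eapply Rle_trans; [apply Sp_norm; lra|]. replace M with (d + (M - d))%nat by lia.
    rewrite sum_ext_zero. unfold B; lra. intros k Hk. rewrite Hz by auto. rewrite Cmod_0. ring. }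
  assert (Hint := Cmod_f_int a f r Hf Hr). pose proof PI_RGT_0.
  assert (Hle : RInt (fun t => Cmod (f (zc r t))) 0 (2*PI) <= RInt (fun _ => B) 0 (2*PI)).
  { apply RInt_le; [lra|exact Hint|apply ex_RInt_const|intros; apply Hpt]. }
  rewrite RInt_const in Hle. change (scal (2 * PI - 0) B) with ((2*PI - 0) * B) in Hle.
  unfold M1. change (fun t => Cmod (f (r * cos t, r * sin t))) with (fun t => Cmod (f (zc r t))).
  replace B with (/(2*PI) * ((2*PI - 0) * B)) by (field; lra).
  apply Rmult_le_compat_l; [|exact Hle]. left. apply Rinv_0_lt_compat; lra.
Qed.

Lemma kinf (a : nat -> C) (f : C -> C) (n : nat) :
  entire_with_coeffs a f -> (exists k, (n < k)%nat /\ a k <> 0%C) -> tends_to_infty (kappa a f n).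
Proof.
  intros Hf [k [Hnk Hak]] M. unfold kappa.
  destruct (Req_EM_T (Cmod (a n)) 0) as [H0|H0].
  - exists 0. intros; simpl; auto.
  - set (A := Cmod (a n)) in *. set (Bk := Cmod (a k)).
    assert (HA : 0 < A) by (pose proof (Cmod_ge_0 (a n)); unfold A in *; lra).
    assert (HB : 0 < Bk) by (apply Cmod_gt_0; auto).
    exists (Rmax 1 (Rabs M * A / Bk)). intros r Hr. simpl.
    assert (Hr1 : 1 < r) by (eapply Rle_lt_trans; [apply Rmax_l|]; eauto).
    assert (Hr2 : Rabs M * A / Bk < r) by (eapply Rle_lt_trans; [apply Rmax_r|]; eauto).
    assert (Hr3 : Rabs M * A < Bk * r).
    { apply (Rmult_lt_compat_r Bk) in Hr2; auto. unfold Rdiv in Hr2.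
      rewrite Rmult_assoc, Rinv_l in Hr2 by lra. lra. }
    pose proof (cauchy_lb a f r k Hf ltac:(lra)) as Hc. fold Bk in Hc.
    assert (Hpow : r ^ (S n) <= r ^ k) by (apply Rle_pow; [lra|lia]).
    simpl in Hpow. assert (Hrn : 0 < r ^ n) by (apply pow_lt; lra).
    assert (HM : M * (A * r ^ n) < M1 f r).
    { pose proof (Rle_abs M). assert (HAr : 0 < A * r ^ n) by (apply Rmult_lt_0_compat; lra).
      assert (M * (A * r^n) <= Rabs M * (A * r^n)) by (apply Rmult_le_compat_r; lra).
      assert (Rabs M * A * r ^ n < Bk * r * r ^ n) by (apply Rmult_lt_compat_r; lra).
      assert (Bk * (r * r ^ n) <= Bk * r ^ k) by (apply Rmult_le_compat_l; lra).
      rewrite Rmult_comm in Hc. lra. }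
    apply (Rmult_lt_reg_r (A * r ^ n)); [nra|]. unfold Rdiv. rewrite Rmult_assoc, Rinv_l by nra. lra.
Qed.

Lemma sum_abs_nonneg (a : nat -> C) (N : nat) : 0 <= sum_n (fun j => Cmod (a j)) N.
Proof.
  induction N as [|N IH].
  - rewrite sum_O. apply Cmod_ge_0.
  - rewrite sum_Sn. change (plus ?x ?y) with (x + y). pose proof (Cmod_ge_0 (a (S N))). simpl in *. lra.
Qed.

Lemma sum_pow_le (a : nat -> C) (r : R) : 1 <= r -> forall N,
  sum_n (fun j => Cmod (a j) * r ^ j) N <= sum_n (fun j => Cmod (a j)) N * r ^ N.
Proof.
  intros Hr N. induction N as [|N IH].
  - rewrite !sum_O. simpl. lra.
  - rewrite !sum_Sn. change (plus ?x ?y) with (x + y). simpl pow.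
    pose proof (sum_abs_nonneg a N). assert (1 <= r ^ N) by (apply pow_R1_Rle; lra).
    assert (r ^ N <= r * r ^ N) by nra.
    assert (sum_n (fun j => Cmod (a j)) N * r ^ N <= sum_n (fun j => Cmod (a j)) N * (r * r ^ N)) by (apply Rmult_le_compat_l; lra).
    simpl in *. lra.
Qed.

Lemma Bbound (a : nat -> C) (r : R) (d : nat) : 1 <= r ->
  sum_n (fun j => Cmod (a j) * r ^ j) d <= Cmod (a d) * r ^ d + sum_n (fun j => Cmod (a j)) d * r ^ d / r.
Proof.
  intros Hr. pose proof (sum_abs_nonneg a d) as HT.
  assert (Hrd : 0 < r ^ d) by (apply pow_lt; lra).
  destruct d as [|d].
  - rewrite sum_O. simpl in *. assert (0 <= sum_n (fun j => Cmod (a j)) 0 * 1 / r).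
    { apply Rmult_le_pos; [lra|]. left. apply Rinv_0_lt_compat; lra. } lra.
  - rewrite sum_Sn. change (plus ?x ?y) with (x + y). rewrite (sum_Sn (fun j => Cmod (a j))) in *.
    change (plus ?x ?y) with (x + y) in *.
    pose proof (sum_pow_le a r Hr d).
    replace (r ^ S d / r) with (r ^ d) by (simpl; field; lra).
    pose proof (Cmod_ge_0 (a (S d))). assert (0 < r ^ d) by (apply pow_lt; lra).
    simpl in *. replace ((sum_n (fun j : nat => Cmod (a j)) d + Cmod (a (S d))) * (r * r ^ d) / r) with ((sum_n (fun j : nat => Cmod (a j)) d + Cmod (a (S d))) * r ^ d) by (field; lra).
    assert (0 <= Cmod (a (S d)) * r ^ d) by (apply Rmult_le_pos; lra). lra.
Qed.

Lemma kfin (a : nat -> C) (f : C -> C) (d : nat) :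
  entire_with_coeffs a f -> poly_degree a d -> tends_to_fin (kappa a f d) 1.
Proof.
  intros Hf Hpd eps Heps. destruct Hpd as [Hd Hz].
  set (A := Cmod (a d)). set (T := sum_n (fun j => Cmod (a j)) d).
  assert (HA : 0 < A) by (apply Cmod_gt_0; auto).
  pose proof (sum_abs_nonneg a d) as HT. fold T in HT.
  exists (Rmax 1 (T / (A * eps))). intros r Hr.
  assert (Hr1 : 1 < r) by (eapply Rle_lt_trans; [apply Rmax_l|]; eauto).
  assert (Hr2 : T / (A * eps) < r) by (eapply Rle_lt_trans; [apply Rmax_r|]; eauto).
  assert (Hr3 : T < A * eps * r).
  { apply (Rmult_lt_compat_r (A * eps)) in Hr2; [|nra]. unfold Rdiv in Hr2.
    rewrite Rmult_assoc, Rinv_l in Hr2 by nra. lra. }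
  unfold kappa. destruct (Req_EM_T (Cmod (a d)) 0) as [H0|H0].
  { exfalso. apply Hd. apply Cmod_eq_0. auto. }
  fold A. eexists; split; [reflexivity|].
  assert (Hrd : 0 < r ^ d) by (apply pow_lt; lra).
  pose proof (cauchy_lb a f r d Hf ltac:(lra)) as Hlo. fold A in Hlo.
  pose proof (poly_ub a f r d Hf (conj Hd Hz) ltac:(lra)) as Hup.
  pose proof (Bbound a r d ltac:(lra)) as HB. fold A T in HB.
  assert (HX : 0 < A * r ^ d) by nra.
  assert (Hk1 : 1 <= M1 f r / (A * r ^ d)).
  { apply (Rmult_le_reg_r (A * r ^ d)); auto. unfold Rdiv. rewrite Rmult_assoc, Rinv_l by lra. lra. }
  assert (Hk2 : M1 f r / (A * r ^ d) < 1 + eps).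
  { apply (Rmult_lt_reg_r (A * r ^ d)); auto. unfold Rdiv. rewrite Rmult_assoc, Rinv_l by lra.
    assert (T * r ^ d / r < eps * (A * r ^ d)).
    { apply (Rmult_lt_reg_r r); [lra|]. unfold Rdiv. rewrite Rmult_assoc, Rinv_l by lra.
      rewrite Rmult_1_r. nra. }
    lra. }
  rewrite Rabs_pos_eq; lra.
Qed.

Theorem theorem4p4 (a : nat -> C) (f : C -> C) (Hf : entire_with_coeffs a f) :
  (transcendental a -> forall n : nat, tends_to_infty (kappa a f n)) /\
  (forall d : nat, poly_degree a d ->
     (forall n : nat, n <> d -> tends_to_infty (kappa a f n)) /\
     tends_to_fin (kappa a f d) 1).
Proof.
  split.
  - intros Htr n. apply kinf; auto. destruct (Htr (S n)) as [k [Hk Hak]]. exists k. split; auto; lia.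
  - intros d Hpd. split.
    + intros n Hn. destruct (Compare_dec.lt_dec n d) as [Hlt|Hge].
      * apply kinf; auto. exists d. split; auto. apply Hpd.
      * intros M. exists 0. intros r _. unfold kappa.
        destruct (Req_EM_T (Cmod (a n)) 0) as [H0|H0]; [simpl; auto|].
        exfalso. apply H0. rewrite (proj2 Hpd n) by lia. apply Cmod_0.
    + apply kfin; auto.
Qed.
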